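(* Let $s,t\ge 1$, let $k=s+t+4\le n$, and let $Q(s,t)$ be the unicyclic graph on $k$ vertices consisting of a $4$-cycle $v_1v_2v_3v_4v_1$, $s$ further vertices each adjacent only to $v_1$, and $t$ further vertices each adjacent only to $v_2$. Regard $Q(s,t)$ as a subgraph of $K_n$ and let $\Gamma=(K_n,Q(s,t)^-)$. Then, with $u=n-k$, $$\varphi(\Gamma,\lambda)=(\lambda+1)^{n-7}\Big(\lambda^7+(7-n)\lambda^6+(21-6n)\lambda^5+(12k-15n+4ku+8st-13)\lambda^4+(48k-20n+16ku+32st-157)\lambda^3+(113n-56k-8ku-16st(u-1)-267)\lambda^2+(250n-208k-48ku-32st(u+1)-185)\lambda+127n-116k-28ku+24st(2u-1)-47\Big).$$
   Context: A signed graph is a pair $(G,\sigma)$ with $\sigma:E(G)\to\{+,-\}$; its adjacency matrix has $(i,j)$-entry $\sigma(v_iv_j)$ if $v_iv_j\in E(G)$ and $0$ otherwise. For a subgraph $H$ of $K_n$, $(K_n,H^-)$ denotes the signed complete graph on $n$ vertices whose negative edges are exactly the edges of $H$ and all other edges are positive. $\varphi(\Gamma,\lambda)=\det(\lambda I-A(\Gamma))$. *)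

(* Defs.v *)
From mathcomp Require Import all_boot all_order all_algebra.
Set Implicit Arguments. Unset Strict Implicit. Unset Printing Implicit Defensive.
Import Order.TTheory GRing.Theory Num.Theory.
Local Open Scope ring_scope.

(* Edge relation of Q(s,t) on vertex labels 0..s+t+3 (as nats):
   0,1,2,3 are v1,v2,v3,v4 (4-cycle v1v2v3v4v1);
   4 .. 3+s are the s pendant vertices attached to v1 (label 0);
   4+s .. 3+s+t are the t pendant vertices attached to v2 (label 1). *)
Definition Qedge0 (s t i j : nat) : bool :=
  [|| (i == 0%N) && (j == 1%N), (i == 1%N) && (j == 2%N),
      (i == 2%N) && (j == 3%N), (i == 3%N) && (j == 0%N),
      (i == 0%N) && (4 <= j < 4 + s)%N
    | (i == 1%N) && (4 + s <= j < 4 + s + t)%N].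

Definition Qedge (s t i j : nat) : bool := Qedge0 s t i j || Qedge0 s t j i.

Definition signedKQ (n s t : nat) (f : 'I_(s + t + 4) -> 'I_n) : 'M[int]_n :=
  \matrix_(i < n, j < n)
    if i == j then 0
    else if [exists a : 'I_(s + t + 4), exists b : 'I_(s + t + 4),
               [&& f a == i, f b == j & Qedge s t a b]]
         then -1 else 1.

Definition Ppoly (n s t : nat) : {poly int} :=
  let N : int := n%:Z in
  let k : int := (s + t + 4)%N%:Z in
  let u : int := (n - (s + t + 4))%N%:Z in
  let st : int := (s * t)%N%:Z in
  'X^7 + (7 - N)%:P * 'X^6 + (21 - 6 * N)%:P * 'X^5
  + (12 * k - 15 * N + 4 * k * u + 8 * st - 13)%:P * 'X^4
  + (48 * k - 20 * N + 16 * k * u + 32 * st - 157)%:P * 'X^3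
  + (113 * N - 56 * k - 8 * k * u - 16 * st * (u - 1) - 267)%:P * 'X^2
  + (250 * N - 208 * k - 48 * k * u - 32 * st * (u + 1) - 185)%:P * 'X
  + (127 * N - 116 * k - 28 * k * u + 24 * st * (2 * u - 1) - 47)%:P.

(* Main.v *)
Require Import Defs.
From Stdlib Require Import PeanoNat.
From mathcomp Require Import all_boot all_order all_algebra.
From mathcomp Require Import ring zify.
Set Implicit Arguments. Unset Strict Implicit. Unset Printing Implicit Defensive.
Import GRing.Theory.
Local Open Scope ring_scope.

Definition Ec (a b : nat) : bool :=
  match a, b with
  | 0,1 | 1,0 | 1,2 | 2,1 | 2,3 | 3,2 | 3,0 | 0,3 | 0,4 | 4,0 | 1,5 | 5,1 => true
  | _,_ => false end.

Lemma Ec_refl a : Ec a a = false.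
Proof. by do 6 (case: a => [|a] //). Qed.

Lemma Ec_6 b : Ec 6 b = false.
Proof. by []. Qed.

Definition classOf (s a : nat) : nat :=
  if (a < 4)%N then a else if (a < 4 + s)%N then 4%N else 5%N.

Lemma classOf_le s a : (classOf s a <= 5)%N.
Proof. rewrite /classOf; case: ifP => h1; last case: ifP => h2; lia. Qed.

Lemma classOf_spec s t a : (a < s + t + 4)%N ->
  [/\ (a == 0)%N = (classOf s a == 0)%N, (a == 1)%N = (classOf s a == 1)%N,
      (a == 2)%N = (classOf s a == 2)%N, (a == 3)%N = (classOf s a == 3)%N &
      (4 <= a < 4 + s)%N = (classOf s a == 4)%N] /\
      (4 + s <= a < 4 + s + t)%N = (classOf s a == 5)%N.
Proof.
move=> ha; rewrite /classOf; case: ifP => h1; last case: ifP => h2; (split; [split|]); lia.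
Qed.

Lemma Qedge_cls s t (a b : 'I_(s + t + 4)) :
  Qedge s t a b = Ec (classOf s a) (classOf s b).
Proof.
have [[a0 a1 a2 a3 a4] a5] := classOf_spec (ltn_ord a).
have [[b0 b1 b2 b3 b4] b5] := classOf_spec (ltn_ord b).
rewrite /Qedge /Qedge0 a0 a1 a2 a3 a4 a5 b0 b1 b2 b3 b4 b5.
have := classOf_le s a; have := classOf_le s b.
move: (classOf s a) (classOf s b) => x y.
by case: x => [|[|[|[|[|[|x]]]]]]; case: y => [|[|[|[|[|[|y]]]]]].
Qed.

Section S.
Variable R : comNzRingType.
Definition minorf (j : nat) (A : nat -> nat -> option R) (i k : nat) :=
  A i.+1 (if Nat.ltb k j then k else k.+1).
Fixpoint detl (n : nat) (A : nat -> nat -> option R) : R :=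
  match n with 0 => 1 | n'.+1 =>
   foldr (fun j acc => match A 0%N j with None => acc
     | Some v => (if odd j then - (v * detl n' (minorf j A)) else v * detl n' (minorf j A)) + acc end)
     0 (iota 0 n'.+1) end.

Lemma foldr_sum n A (s : seq nat) :
  foldr (fun j acc => match A 0%N j with None => acc
     | Some v => (if odd j then - (v * detl n (minorf j A)) else v * detl n (minorf j A)) + acc end) 0 s
  = \sum_(j <- s) (-1) ^+ j * odflt 0 (A 0%N j) * detl n (minorf j A).
Proof.
elim: s => [|j s IHs]; first by rewrite big_nil.
rewrite big_cons /= IHs; case: (A 0%N j) => [v|] /=.
  by rewrite -signr_odd; case: (odd j) => /=; rewrite ?expr0 ?expr1 ?mulN1r ?mul1r ?mulNr.
by rewrite mulr0 mul0r add0r.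
Qed.

Lemma detlE n A : detl n A = \det (\matrix_(i < n, j < n) odflt 0 (A i j)).
Proof.
elim: n A => [|n IH] A; first by rewrite det_mx00.
rewrite (expand_det_row _ ord0).
transitivity (\sum_(j <- iota 0 n.+1) (-1) ^+ j * odflt 0 (A 0%N j) * detl n (minorf j A)).
  exact: foldr_sum.
have -> : iota 0 n.+1 = index_iota 0 n.+1 by rewrite /index_iota subn0.
rewrite big_mkord; apply: eq_bigr => j _.
rewrite /cofactor mxE IH add0n mulrCA mulrA; congr (_ * _ * \det _).
apply/matrixP => i k; rewrite !mxE /minorf /= /bump /=.
rewrite add1n; case: (Nat.ltb_spec k j) => /leP; rewrite ?ltnNge => h; first by rewrite (negbTE h).
by rewrite h.
Qed.

Definition cnt (s t : R) (b : nat) : R :=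
  match b with 4 => s | 5 => t | _ => 1 end.
Definition rsum (s t : R) (a : nat) : R :=
  match a with 0 => 2%:R + s | 1 => 2%:R + t | 2 => 2%:R | 3 => 2%:R | _ => 1 end.
Definition Topt (x s t N : R) (a b : nat) : option R :=
  if Nat.eqb a 6 then (if Nat.eqb b 6 then Some (x - N) else Some (- cnt s t b))
  else if Nat.eqb b 6 then Some (2%:R * rsum s t a)
  else if Nat.eqb a b then Some x else if Ec a b then Some (2%:R * cnt s t b) else None.

Lemma detT X s t u : let k := s + t + 4%:R in let N := u + k in let st := s * t in
 \det (\matrix_(a < 7, b < 7) odflt 0 (Topt (X + 1) s t N a b)) =
  X^+7 + (7%:R - N) * X^+6 + (21%:R - 6%:R * N) * X^+5
  + (12%:R * k - 15%:R * N + 4%:R * k * u + 8%:R * st - 13%:R) * X^+4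
  + (48%:R * k - 20%:R * N + 16%:R * k * u + 32%:R * st - 157%:R) * X^+3
  + (113%:R * N - 56%:R * k - 8%:R * k * u - 16%:R * st * (u - 1) - 267%:R) * X^+2
  + (250%:R * N - 208%:R * k - 48%:R * k * u - 32%:R * st * (u + 1) - 185%:R) * X
  + (127%:R * N - 116%:R * k - 28%:R * k * u + 24%:R * st * (2%:R * u - 1) - 47%:R).
Proof.
move=> k N st; rewrite -detlE.
cbv beta iota zeta delta [detl minorf foldr iota odd Nat.ltb Nat.leb Nat.eqb Topt Ec cnt rsum odflt oapp negb].
rewrite /st /N /k; ring.
Qed.
End S.

Lemma sylvester (R : comNzRingType) n m (A : 'M[R]_(n, m)) (B : 'M[R]_(m, n)) (x : R) :
  x ^+ m * \det (x%:M - A *m B) = x ^+ n * \det (x%:M - B *m A).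
Proof.
pose M1 : 'M[R]_(n + m) := block_mx 1%:M 0 (- B) x%:M.
pose M2 : 'M[R]_(n + m) := block_mx x%:M A B 1%:M.
pose M3 : 'M[R]_(n + m) := block_mx 1%:M 0 (- B) 1%:M.
have e1 : M1 *m M2 = block_mx x%:M A 0 (x%:M - B *m A).
  rewrite /M1 /M2 mulmx_block !mul1mx !mul0mx !addr0 ?add0r mulmx1.
  by rewrite mul_mx_scalar mul_scalar_mx mulNmx scalerN addNr (addrC _ x%:M).
have e2 : M2 *m M3 = block_mx (x%:M - A *m B) A 0 1%:M.
  rewrite /M2 /M3 mulmx_block !mulmx1 !mulmx0 ?addr0 !mulmxN mul_scalar_mx.
  by rewrite scale1r subrr !add0r.
have d1 : \det M1 = x ^+ m by rewrite /M1 det_lblock det1 det_scalar mul1r.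
have d3 : \det M3 = 1 by rewrite /M3 det_lblock !det1 mul1r.
have := congr1 determinant e1; rewrite det_mulmx d1 det_ublock det_scalar => <-.
have := congr1 determinant e2; rewrite det_mulmx d3 mulr1 det_ublock det1 mulr1 => ->.
by [].
Qed.

Section Main.
Variables (n s t : nat) (f : 'I_(s + t + 4) -> 'I_n).
Hypothesis finj : injective f.

Definition cls (i : 'I_n) : nat :=
  if [pick a | f a == i] is Some a then classOf s a else 6%N.

Lemma cls_f a : cls (f a) = classOf s a.
Proof.
rewrite /cls; case: pickP => [a' /eqP /finj -> // | /(_ a)]; by rewrite eqxx.
Qed.

Lemma cls_out i : i \notin [set f a | a in setT] -> cls i = 6%N.
Proof.
move=> hi; rewrite /cls; case: pickP => [a /eqP ha | //].
by move: hi; rewrite -ha imset_f.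
Qed.

Lemma cls_le i : (cls i <= 6)%N.
Proof. rewrite /cls; case: pickP => [a _ |//]; have := classOf_le s a; lia. Qed.

Lemma exists_edge i j :
  [exists a, exists b, [&& f a == i, f b == j & Qedge s t a b]] = Ec (cls i) (cls j).
Proof.
case: (boolP (i \in [set f a | a in setT])) => [/imsetP [a _ ->] | hi]; last first.
  rewrite cls_out //; apply/negbTE/existsP => [[a /existsP [b /and3P [/eqP ha _ _]]]].
  by move: hi; rewrite -ha imset_f.
case: (boolP (j \in [set f a | a in setT])) => [/imsetP [b _ ->] | hj]; last first.
  rewrite (cls_out hj); have : Ec (cls (f a)) 6 = false.
    by have := cls_le (f a); move: (cls (f a)) => x; case: x => [|[|[|[|[|[|[|x]]]]]]].
  move=> ->; apply/negbTE/existsP => [[a' /existsP [b /and3P [_ /eqP hb _]]]].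
  by move: hj; rewrite -hb imset_f.
rewrite !cls_f -Qedge_cls; apply/idP/idP.
  by move=> /existsP [a' /existsP [b' /and3P [/eqP /finj -> /eqP /finj -> ->]]].
by move=> h; apply/existsP; exists a; apply/existsP; exists b; rewrite !eqxx h.
Qed.

Lemma sum_classOf (R : nmodType) (G : nat -> R) :
  \sum_(a < s + t + 4) G (classOf s a) = G 0%N + G 1%N + G 2%N + G 3%N + G 4%N *+ s + G 5%N *+ t.
Proof.
rewrite -(big_mkord xpredT (fun a => G (classOf s a))).
rewrite (big_cat_nat (n := 4)) //=; last lia.
rewrite (big_cat_nat (m := 4) (n := 4 + s)) //=; try lia.
have -> : \sum_(0 <= i < 4) G (classOf s i) = G 0%N + G 1%N + G 2%N + G 3%N.
  by rewrite /index_iota /= !big_cons big_nil addr0 !addrA.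
rewrite (@eq_big_nat _ _ _ 4 (4 + s) _ (fun _ => G 4%N)); last first.
  by move=> i /andP [h1 h2]; rewrite /classOf ltnNge h1 /= h2.
rewrite (@eq_big_nat _ _ _ (4 + s) (s + t + 4) _ (fun _ => G 5%N)); last first.
  move=> i /andP [h1 h2]; rewrite /classOf; have -> : (i < 4)%N = false by lia.
  by have -> : (i < 4 + s)%N = false by lia.
rewrite !sumr_const_nat addrA; congr (_ + _ *+ _ + _ *+ _); lia.
Qed.


Lemma sum_cls (R : nmodType) (G : nat -> R) :
  \sum_(i < n) G (cls i) = G 0%N + G 1%N + G 2%N + G 3%N + G 4%N *+ s + G 5%N *+ t
     + G 6%N *+ (n - (s + t + 4)).
Proof.
rewrite (bigID (fun i => i \in [set f a | a in setT])) /=.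
rewrite (big_imset (fun i => G (cls i))) /=; last by move=> x y _ _; apply: finj.
rewrite (eq_bigr (fun a : 'I_(s + t + 4) => G (classOf s a))); last by move=> a _; rewrite cls_f.
rewrite [X in _ + X](eq_bigr (fun _ => G 6%N)); last by move=> i hi; rewrite cls_out.
rewrite sumr_const.
have -> : #|[pred i | i \notin [set f a | a in setT]]| = (n - (s + t + 4))%N.
  have hc := cardsC [set f a | a in setT]; rewrite card_imset // cardsT !card_ord in hc.
  have -> : (n - (s + t + 4))%N = #|~: [set f a | a in setT]| by move: hc; set m := #|~: _|; lia.
  apply: eq_card => i; by rewrite !inE.
congr (_ + _). rewrite -sum_classOf. apply: eq_bigl => a; by rewrite inE.
Qed.
End Main.

Definition Acn (R : comNzRingType) (x c : nat) : R := if c == 6%N then 1 else (x == c)%:R.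
Definition Bcn (R : comNzRingType) (c y : nat) : R := if c == 6%N then 1 else - 2%:R * (Ec c y)%:R.

Section M3.
Variables (n s t : nat) (f : 'I_(s + t + 4) -> 'I_n).
Hypothesis finj : injective f.

Definition Am (R : comNzRingType) : 'M[R]_(n, 7) := \matrix_(i, c) Acn R (cls f i) c.
Definition Bm (R : comNzRingType) : 'M[R]_(7, n) := \matrix_(c, j) Bcn R c (cls f j).

Lemma AB_entry R i j : (Am R *m Bm R) i j = 1 - 2%:R * (Ec (cls f i) (cls f j))%:R.
Proof.
rewrite !mxE !big_ord_recl big_ord0 !mxE /=.
have := cls_le f i; move: (cls f i) => x.
case: x => [|[|[|[|[|[|[|x]]]]]]] // _; rewrite /Acn /Bcn /=; ring.
Qed.


Lemma charmx_eq :
  char_poly_mx (signedKQ f) = ('X + 1)%:M - Am _ *m Bm {poly int}.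
Proof.
apply/matrixP => i j; have h := AB_entry {poly int} i j; rewrite !mxE in h; rewrite /char_poly_mx !mxE h.
case: (eqVneq i j) => [<-|_].
  by rewrite Ec_refl /= polyC0 mulr1n; ring.
rewrite exists_edge //; case: (Ec _ _) => /=; rewrite ?polyCN ?polyC1 mulr0n; ring.
Qed.

Lemma BA_T (R : comNzRingType) (x : R) :
  x%:M - Bm R *m Am R = \matrix_(a < 7, b < 7)
    odflt 0 (Topt x s%:R t%:R ((n - (s + t + 4))%:R + (s%:R + t%:R + 4%:R)) a b).
Proof.
apply/matrixP => a b; rewrite !mxE.
rewrite (eq_bigr (fun i => Bcn R a (cls f i) * Acn R (cls f i) b)); last by move=> i _; rewrite !mxE.
rewrite (sum_cls finj (fun y => Bcn R a y * Acn R y b)).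
case: a => [[|[|[|[|[|[|[|a]]]]]]] Ha] //; case: b => [[|[|[|[|[|[|[|b]]]]]]] Hb] //.
all: rewrite /Bcn /Acn /Topt /=.
all: ring.
Qed.
End M3.

Theorem lemma3p3 (n s t : nat) (f : 'I_(s + t + 4) -> 'I_n) :
  (1 <= s)%N -> (1 <= t)%N -> (s + t + 4 <= n)%N -> injective f ->
  ((7 <= n)%N ->
     char_poly (signedKQ f) = ('X + 1) ^+ (n - 7) * Ppoly n s t) /\
  ('X + 1) ^+ 7 * char_poly (signedKQ f) = ('X + 1) ^+ n * Ppoly n s t.
Proof.
move=> hs ht hn finj.
have key : ('X + 1) ^+ 7 * char_poly (signedKQ f) = ('X + 1) ^+ n * Ppoly n s t.
  rewrite /char_poly (charmx_eq finj) sylvester (BA_T finj); congr (_ * _).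
  have := detT 'X (s%:R) (t%:R) ((n - (s + t + 4))%:R); cbv zeta => ->.
  rewrite /Ppoly.
  set u := (n - (s + t + 4))%N.
  have hN : n = (u + (s + t + 4))%N by rewrite /u subnK.
  have hC : forall z : int, z%:P = z%:~R :> {poly int}.
    by move=> z; rewrite -[z in LHS]intz rmorph_int.
  rewrite [in RHS]hN !hC.
  ring.
split=> // h7.
have hx : ('X + 1 : {poly int}) ^+ 7 != 0.
  rewrite expf_neq0 // -size_poly_eq0.
  have -> : ('X + 1 : {poly int}) = 'X + 1%:P by rewrite polyC1.
  by rewrite size_XaddC.
apply: (mulfI hx); rewrite key mulrA -exprD subnKC //.
Qed.
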